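(* For every integer $k \ge 1$, the edge set of the hypercube $Q_{2k}$ can be partitioned into the edge sets of $k$ pairwise edge-disjoint spanning trees of $Q_{2k}$ together with a matching consisting of exactly $k$ edges.
   Context: The $n$-dimensional hypercube $Q_n$ is the graph whose vertices are all binary vectors of length $n$, with two vertices adjacent if and only if they differ in exactly one coordinate. A matching is a set of pairwise vertex-disjoint edges. *)

(* Defs.v *)
From mathcomp Require Import all_boot.
Set Implicit Arguments. Unset Strict Implicit. Unset Printing Implicit Defensive.

Definition qvert (n : nat) := {ffun 'I_n -> bool}.

Definition qadj (n : nat) (x y : qvert n) : bool :=
  #|[set i : 'I_n | x i != y i]| == 1.

Definition qedges (n : nat) : {set {set qvert n}} :=
  [set e : {set qvert n} |
    [exists x : qvert n, exists y : qvert n, qadj x y && (e == [set x; y])]].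

Definition erel (n : nat) (F : {set {set qvert n}}) : rel (qvert n) :=
  fun x y => (x != y) && ([set x; y] \in F).

Definition connectedE (n : nat) (F : {set {set qvert n}}) : Prop :=
  forall x y : qvert n, connect (erel F) x y.

Definition acyclicE (n : nat) (F : {set {set qvert n}}) : Prop :=
  forall s : seq (qvert n), uniq s -> 3 <= size s -> ~~ cycle (erel F) s.

Definition spanning_tree (n : nat) (F : {set {set qvert n}}) : Prop :=
  [/\ F \subset qedges n, connectedE F & acyclicE F].

Definition matching (n : nat) (M : {set {set qvert n}}) : Prop :=
  M \subset qedges n /\
  forall e f, e \in M -> f \in M -> e != f -> [disjoint e & f].

(* Main.v *)
Require Import Defs.
From mathcomp Require Import all_boot zify.
Set Implicit Arguments. Unset Strict Implicit. Unset Printing Implicit Defensive.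

Lemma set2_eq (T : finType) (x y a b : T) :
  [set x; y] = [set a; b] -> (x = a /\ y = b) \/ (x = b /\ y = a).
Proof.
move=> E.
have hx : x \in [set a; b] by rewrite -E !inE eqxx.
have hy : y \in [set a; b] by rewrite -E !inE eqxx orbT.
have ha : a \in [set x; y] by rewrite E !inE eqxx.
have hb : b \in [set x; y] by rewrite E !inE eqxx orbT.
case/set2P: hx => Hx; case/set2P: hy => Hy; subst.
- by case/set2P: hb => ->; left.
- by left.
- by right.
- by case/set2P: ha => ->; right.
Qed.

Lemma erel_sym n (F : {set {set qvert n}}) : symmetric (erel F).
Proof. by move=> x y; rewrite /erel eq_sym setUC. Qed.

Lemma ptree_spanning n (F : {set {set qvert n}}) (r : qvert n)
  (p : qvert n -> qvert n) (h : qvert n -> nat) :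
  F \subset qedges n ->
  (forall v, v != r -> h (p v) < h v) ->
  (forall v, v != r -> [set v; p v] \in F) ->
  (forall e, e \in F -> exists2 v, v != r & e = [set v; p v]) ->
  spanning_tree F.
Proof.
move=> sub hdec hin hout.
have epv : forall v, v != r -> erel F v (p v).
  move=> v nv; rewrite /erel hin // andbT.
  by apply/eqP=> E; have := hdec v nv; rewrite -E ltnn.
have toroot : forall m v, h v <= m -> connect (erel F) v r.
  elim=> [|m IH] v hv; case: (eqVneq v r) => [->|nv]; first exact: connect0.
  - by have := hdec v nv; rewrite ltnNge (leq_trans hv (leq0n _)).
  - exact: connect0.
  - apply: connect_trans (connect1 (epv v nv)) (IH _ _).
    by rewrite -ltnS (leq_trans (hdec v nv) hv).
have edge : forall x y, erel F x y -> (x != r /\ p x = y) \/ (y != r /\ p y = x).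
  move=> x y /andP [_ /hout [w nw /set2_eq [[-> ->]|[-> ->]]]].
  - by left.
  - by right.
split=> //.
- move=> x y; apply: connect_trans (toroot _ x (leqnn _)) _.
  by rewrite (sym_connect_sym (@erel_sym n F)) (toroot _ y (leqnn _)).
- move=> s us ss; apply/negP=> cs.
  have s0 : head r s \in s by case: s ss {us cs} => // a s' _; rewrite mem_head.
  case: (arg_maxnP h s0) => v vs vmax.
  case: (rot_to vs) => i t Et.
  have ut : uniq (v :: t) by rewrite -Et rot_uniq.
  have ct : cycle (erel F) (v :: t) by rewrite -Et rot_cycle.
  have st : 3 <= size (v :: t) by rewrite -Et size_rot.
  have mt : forall w, w \in v :: t -> h w <= h v.
    by move=> w; rewrite -Et mem_rot => /vmax.
  case: t Et ut ct st mt => [|u [|w0 s2]] //= _ ut ct _ mt.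
  move: ct => /=; rewrite -cats1 cat_path /= => /and3P [evu _]; rewrite andbT => /andP [_ elv].
  set w := last w0 s2 in elv.
  have wm : w \in w0 :: s2 by apply: mem_last.
  have wu : w != u.
    move: ut => /= /andP [_ /andP [hu _]].
    by apply/eqP=> E; move: hu; rewrite -E wm.
  have pu : p v = u.
    case: (edge _ _ evu) => [[_ //]|[nu puv]].
    have := hdec u nu; rewrite puv ltnNge mt //.
    by rewrite !inE eqxx orbT.
  have pw : p v = w.
    case: (edge _ _ elv) => [[nw pwv]|[_ //]].
    have := hdec w nw; rewrite pwv ltnNge mt //.
    by rewrite in_cons in_cons wm !orbT.
  by move: wu; rewrite -pu -pw eqxx.
Qed.

Definition lo n (s : qvert n.+2) : qvert n := [ffun j => s (lift ord0 (lift ord0 j))].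
Definition bx n (s : qvert n.+2) : bool := s ord0.
Definition byy n (s : qvert n.+2) : bool := s (lift ord0 ord0).
Definition mk n (u : qvert n) (x y : bool) : qvert n.+2 :=
  [ffun i => if unlift ord0 i is Some i' then
               (if unlift ord0 i' is Some j then u j else y) else x].

Lemma lo_mk n (u : qvert n) x y : lo (mk u x y) = u.
Proof. by apply/ffunP=> j; rewrite !ffunE !liftK. Qed.
Lemma bx_mk n (u : qvert n) x y : bx (mk u x y) = x.
Proof. by rewrite /bx ffunE unlift_none. Qed.
Lemma byy_mk n (u : qvert n) x y : byy (mk u x y) = y.
Proof. by rewrite /byy ffunE liftK unlift_none. Qed.
Lemma mkK n (s : qvert n.+2) : mk (lo s) (bx s) (byy s) = s.
Proof.
apply/ffunP=> i; rewrite ffunE.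
case: unliftP => [i' ->|->] //; case: unliftP => [j ->|->] //.
by rewrite ffunE.
Qed.
Lemma mkP n (s : qvert n.+2) : exists u x y, s = mk u x y.
Proof. by exists (lo s), (bx s), (byy s); rewrite mkK. Qed.
Lemma mk_inj n (u v : qvert n) x y x' y' :
  (mk u x y == mk v x' y') = [&& u == v, x == x' & y == y'].
Proof.
apply/idP/idP => [/eqP E|/and3P [/eqP-> /eqP-> /eqP->] //].
have := congr1 (@lo n) E; have := congr1 (@bx n) E; have := congr1 (@byy n) E.
by rewrite !lo_mk !bx_mk !byy_mk => -> -> ->; rewrite !eqxx.
Qed.

Lemma card_setP m (P : pred 'I_m) : #|[set i | P i]| = \sum_(i < m) (P i : nat).
Proof.
rewrite -sum1_card big_mkcond /=; apply: eq_bigr => i _.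
by rewrite inE; case: (P i).
Qed.

Lemma card_diffs n (u v : qvert n) x y x' y' :
  #|[set i | mk u x y i != mk v x' y' i]| =
  (x != x') + (y != y') + #|[set j | u j != v j]|.
Proof.
rewrite !card_setP !big_ord_recl !ffunE !unlift_none !liftK !unlift_none addnA.
congr (_ + _ + _); apply: eq_bigr => j _; by rewrite !ffunE !liftK.
Qed.

Lemma diffs0 n (u v : qvert n) : (#|[set j | u j != v j]| == 0) = (u == v).
Proof.
rewrite cards_eq0; apply/idP/idP => [/eqP E|/eqP ->].
  apply/eqP/ffunP=> j; apply/eqP; apply: negbNE; apply/negP=> D.
  by move: (in_set0 j); rewrite -E inE D.
by apply/eqP/setP=> j; rewrite !inE eqxx.
Qed.

Lemma qadj_copy n (u v : qvert n) x y : qadj (mk u x y) (mk v x y) = qadj u v.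
Proof. by rewrite /qadj card_diffs !eqxx. Qed.
Lemma qadj_fx n (u : qvert n) x y : qadj (mk u x y) (mk u (~~x) y).
Proof.
rewrite /qadj card_diffs eqxx.
have /eqP -> : #|[set j | u j != u j]| == 0 by rewrite diffs0.
by case: x; case: y.
Qed.
Lemma qadj_fy n (u : qvert n) x y : qadj (mk u x y) (mk u x (~~y)).
Proof.
rewrite /qadj card_diffs eqxx.
have /eqP -> : #|[set j | u j != u j]| == 0 by rewrite diffs0.
by case: x; case: y.
Qed.
Lemma qadj_split n (u v : qvert n) x y x' y' :
  qadj (mk u x y) (mk v x' y') ->
  (u == v) && ((x != x') && (y == y') || (x == x') && (y != y')) ||
  [&& x == x', y == y' & qadj u v].
Proof.
rewrite /qadj card_diffs.
case: (eqVneq u v) => [<-|ne] /=.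
  have /eqP -> : #|[set j | u j != u j]| == 0 by rewrite diffs0.
  by case: x x' y y' => [] [] [] [].
have : #|[set j | u j != v j]| != 0 by rewrite diffs0.
case: #|[set j | u j != v j]| => [|[|m]] //= _;
  by case: x x' y y' => [] [] [] [].
Qed.

Lemma disj2 (T : finType) (x y z w : T) :
  [disjoint [set x; y] & [set z; w]] = [&& x != z, x != w, y != z & y != w].
Proof.
apply/idP/idP.
- move=> D; have Hx := disjointFr D (set21 x y); have Hy := disjointFr D (set22 x y).
  rewrite !inE in Hx Hy; move: Hx Hy => /norP [-> ->] /norP [-> ->] //.
- case/and4P=> h1 h2 h3 h4; rewrite -setI_eq0; apply/eqP/setP=> t; rewrite !inE.
  apply/negbTE/negP=> /andP [/orP [] /eqP -> /orP [] /eqP E].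
  + by rewrite E eqxx in h1.
  + by rewrite E eqxx in h2.
  + by rewrite E eqxx in h3.
  + by rewrite E eqxx in h4.
Qed.

Lemma qadj_irr n (x : qvert n) : ~~ qadj x x.
Proof.
rewrite /qadj; have /eqP -> : #|[set j | x j != x j]| == 0.
  by rewrite cards_eq0; apply/eqP/setP=> j; rewrite !inE eqxx.
by [].
Qed.

Lemma rk_lt C l1 l2 h1 h2 : l1 < l2 -> h1 < C -> C * l1 + h1 < C * l2 + h2.
Proof. move=> hl hh; nia. Qed.

Definition Dec n K : Prop :=
 exists (lab : qvert n -> qvert n -> option 'I_K) (p : 'I_K -> qvert n -> qvert n)
        (h : 'I_K -> qvert n -> nat) (ma mb : 'I_K -> qvert n),
 [/\ forall s t, lab s t = lab t s,
     forall i v, v != ma i ->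
       [&& qadj v (p i v), lab v (p i v) == Some i & h i (p i v) < h i v],
     forall i s t, qadj s t -> lab s t = Some i ->
       (s != ma i /\ t = p i s) \/ (t != ma i /\ s = p i t),
     forall i, qadj (ma i) (mb i) /\ lab (ma i) (mb i) = None
   & (forall s t, qadj s t -> lab s t = None ->
       exists i, (s = ma i /\ t = mb i) \/ (s = mb i /\ t = ma i)) /\
     (forall i j, i != j -> [disjoint [set ma i; mb i] & [set ma j; mb j]])].

Section Step.
Variables (n k : nat).
Variable lab : qvert n -> qvert n -> option 'I_k.+1.
Variable p : 'I_k.+1 -> qvert n -> qvert n.
Variable h : 'I_k.+1 -> qvert n -> nat.
Variables ma mb : 'I_k.+1 -> qvert n.
Hypothesis Hs : forall s t, lab s t = lab t s.
Hypothesis Ht : forall i v, v != ma i ->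
  [&& qadj v (p i v), lab v (p i v) == Some i & h i (p i v) < h i v].
Hypothesis Hr : forall i s t, qadj s t -> lab s t = Some i ->
  (s != ma i /\ t = p i s) \/ (t != ma i /\ s = p i t).
Hypothesis Hm : forall i, qadj (ma i) (mb i) /\ lab (ma i) (mb i) = None.
Hypothesis Hn : forall s t, qadj s t -> lab s t = None ->
  exists i, (s = ma i /\ t = mb i) \/ (s = mb i /\ t = ma i).
Hypothesis Hd : forall i j, i != j -> [disjoint [set ma i; mb i] & [set ma j; mb j]].

Local Notation a := (ma ord0).
Local Notation b := (mb ord0).

Lemma mamb i : ma i != mb i.
Proof. by apply/eqP=> E; have [H _] := Hm i; move: H; rewrite E (negbTE (qadj_irr _)). Qed.

Lemma dd i j : i != j -> [/\ ma i != ma j, ma i != mb j, mb i != ma j & mb i != mb j].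
Proof. by move/Hd; rewrite disj2 => /and4P [? ? ? ?]. Qed.

Definition pk (u : qvert n) : option 'I_k.+1 := [pick i | (i != ord0) && (ma i == u)].

Lemma pk_ma i : i != ord0 -> pk (ma i) = Some i.
Proof.
move=> ni; rewrite /pk; case: pickP => [j /andP [nj /eqP E]|H].
  case: (eqVneq j i) => [->//|nji]; by have [/eqP] := dd nji.
by move: (H i) => /=; rewrite ni eqxx.
Qed.

Lemma pk_some u i : pk u = Some i -> i != ord0 /\ ma i = u.
Proof. by rewrite /pk; case: pickP => [j /andP [nj /eqP E] [<-]|]. Qed.

Lemma pk_mb j : pk (mb j) = None.
Proof.
rewrite /pk; case: pickP => [i /andP [ni /eqP E]|//].
case: (eqVneq i j) => [Eij|nij].
  by move: (mamb i); rewrite E Eij eqxx.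
by have [_ /eqP] := dd nij.
Qed.

Lemma pk_a : pk a = None.
Proof.
rewrite /pk; case: pickP => [i /andP [ni /eqP E]|//].
by have [/eqP] := dd ni.
Qed.

Lemma a_ne_b : a != b. Proof. exact: mamb. Qed.
Lemma mb_ne_a i : i != ord0 -> mb i != a.
Proof. by move=> ni; have [] := dd ni. Qed.
Lemma mb_ne_b i : i != ord0 -> mb i != b.
Proof. by move=> ni; have [] := dd ni. Qed.

Definition tB : 'I_k.+2 := ord0.
Definition tT (i : 'I_k.+1) : 'I_k.+2 := lift ord0 i.

Definition labm (u : qvert n) (x y : bool) (v : qvert n) (x' y' : bool) : option 'I_k.+2 :=
 if u == v then
   if (x != x') && (y == y') then
     (if pk u is Some i then Some (tT i) else if y && (u == a) then Some tB else Some (tT ord0))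
   else if (x == x') && (y != y') then
     (if x then (if pk u is Some i then Some (tT i) else if u == a then Some (tT ord0) else Some tB)
      else Some tB)
   else None
 else if (x == x') && (y == y') then
   match lab u v with
   | Some i => if i == ord0 then (if x == y then Some (tT ord0) else Some tB) else Some (tT i)
   | None => if x then (if y then Some tB else if [set u; v] == [set a; b] then None else Some (tT ord0))
             else (if y then Some (tT ord0) else None)
   end
 else None.

Definition lab' (s t : qvert n.+2) := labm (lo s) (bx s) (byy s) (lo t) (bx t) (byy t).

Lemma lab'_mk u x y v x' y' : lab' (mk u x y) (mk v x' y') = labm u x y v x' y'.
Proof. by rewrite /lab' !lo_mk !bx_mk !byy_mk. Qed.

Lemma labm_sym u x y v x' y' : labm u x y v x' y' = labm v x' y' u x y.
Proof.
rewrite /labm; case: (eqVneq u v) => [<-|ne].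
  by case: x x' y y' => [] [] [] [].
rewrite (Hs u v) setUC.
by case: x x' y y' => [] [] [] [].
Qed.

Lemma lab'_sym s t : lab' s t = lab' t s.
Proof. exact: labm_sym. Qed.


Lemma adj_neq (u v : qvert n) : qadj u v -> (u == v) = false.
Proof. by case: (eqVneq u v) => // ->; rewrite (negbTE (qadj_irr v)). Qed.

Lemma adj_neq2 (u v : qvert n.+2) : qadj u v -> (u == v) = false.
Proof. by case: (eqVneq u v) => // ->; rewrite (negbTE (qadj_irr v)). Qed.

Lemma set_ab i : i != ord0 -> ([set ma i; mb i] == [set a; b]) = false.
Proof.
move=> ni; apply/negbTE/negP=> /eqP /set2_eq [[E _]|[E _]].
  by have [/eqP] := dd ni.
by have [_ /eqP] := dd ni.
Qed.

Definition pAm (u : qvert n) (x y : bool) : qvert n.+2 :=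
 match x, y with
 | false, false => mk (p ord0 u) false false
 | true, false => if pk u is Some i then mk (mb i) true false else mk u false false
 | true, true => if u == a then mk u true false else mk (p ord0 u) true true
 | false, true => if pk u is Some i then mk (mb i) false true
                  else if u == a then mk b false true else mk u true true
 end.
Definition pBm (u : qvert n) (x y : bool) : qvert n.+2 :=
 match x, y with
 | true, false => mk (p ord0 u) true false
 | true, true => if u == a then mk b true true
                 else if pk u is Some i then mk (mb i) true true else mk u true false
 | false, true => if u == a then mk u true true else mk (p ord0 u) false true
 | false, false => mk u false true
 end.
Definition pTm (i : 'I_k.+1) (u : qvert n) (x y : bool) : qvert n.+2 :=
 if u == ma i then
   match x, y with
   | true, false => mk u false false
   | true, true => mk u true false
   | false, true => mk u true true
   | false, false => mk u false false
   end
 else mk (p i u) x y.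

Definition levA (u : qvert n) (x y : bool) : nat :=
 match x, y with
 | false, false => 0
 | true, false => if pk u is Some _ then 2 else 1
 | true, true => 3
 | false, true => if pk u is Some _ then 5 else if u == a then 5 else 4
 end.
Definition levB (u : qvert n) (x y : bool) : nat :=
 match x, y with
 | true, false => 0
 | true, true => if u == a then 2 else if pk u is Some _ then 2 else 1
 | false, true => 3
 | false, false => 4
 end.
Definition levT (x y : bool) : nat :=
 match x, y with
 | false, false => 0 | true, false => 1 | true, true => 2 | false, true => 3
 end.

Definition Cc := (\max_(i : 'I_k.+1) \max_(v : qvert n) h i v).+1.
Lemma hC i v : h i v < Cc.
Proof.
rewrite /Cc ltnS.
have h1 : h i v <= \max_(w : qvert n) h i w := leq_bigmax v.
have h2 : \max_(w : qvert n) h i w <= \max_(i : 'I_k.+1) \max_(v : qvert n) h i v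
  := leq_bigmax (F := fun i => \max_(v : qvert n) h i v) i.
exact: leq_trans h1 h2.
Qed.

Definition pA (s : qvert n.+2) := pAm (lo s) (bx s) (byy s).
Definition pB (s : qvert n.+2) := pBm (lo s) (bx s) (byy s).
Definition pT i (s : qvert n.+2) := pTm i (lo s) (bx s) (byy s).
Definition hA (s : qvert n.+2) := Cc * levA (lo s) (bx s) (byy s) + h ord0 (lo s).
Definition hB (s : qvert n.+2) := Cc * levB (lo s) (bx s) (byy s) + h ord0 (lo s).
Definition hT i (s : qvert n.+2) := Cc * levT (bx s) (byy s) + h i (lo s).

Ltac mkS := rewrite ?lo_mk ?bx_mk ?byy_mk.

Lemma treeA s : s != mk a false false ->
  [&& qadj s (pA s), lab' s (pA s) == Some (tT ord0) & hA (pA s) < hA s].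
Proof.
case: (mkP s) => u [x [y ->]]; rewrite /pA /hA; mkS.
case: x; case: y => /=.
-
  move=> _; case: (eqVneq u a) => [->|na]; mkS.
    rewrite qadj_fy lab'_mk /labm eqxx /= !pk_a ?eqxx /=.
    by mkS; apply: rk_lt => //; apply: hC.
  have /and3P [q l hh] := Ht na.
  rewrite qadj_copy q lab'_mk /labm (adj_neq q) /= (eqP l) eqxx /=.
  by rewrite ltn_add2l.
-
  move=> _; case E: (pk u) => [i|]; mkS.
    have [ni ui] := pk_some E; rewrite -ui qadj_copy (Hm i).1 lab'_mk /labm.
    rewrite (adj_neq (Hm i).1) /= (Hm i).2 set_ab //= pk_mb.
    by mkS; apply: rk_lt => //; apply: hC.
  rewrite (qadj_fx u true false) lab'_mk /labm eqxx /= E /=.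
  by apply: rk_lt => //; apply: hC.
-
  move=> _; case E: (pk u) => [i|]; mkS.
    have [ni ui] := pk_some E; rewrite -ui qadj_copy (Hm i).1 lab'_mk /labm.
    rewrite (adj_neq (Hm i).1) /= (Hm i).2 /= pk_mb (negbTE (mb_ne_a ni)).
    by mkS; apply: rk_lt => //; apply: hC.
  case: (eqVneq u a) => [->|na]; mkS.
    rewrite qadj_copy (Hm ord0).1 lab'_mk /labm (adj_neq (Hm ord0).1) /= (Hm ord0).2 /=.
    rewrite pk_mb eq_sym (negbTE a_ne_b).
    by mkS; apply: rk_lt => //; apply: hC.
  rewrite (qadj_fx u false true) lab'_mk /labm eqxx /= !E /= (negbTE na) /=.
  by apply: rk_lt => //; apply: hC.
-
  rewrite mk_inj !eqxx !andbT => na.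
  have /and3P [q l hh] := Ht na.
  rewrite qadj_copy q lab'_mk /labm (adj_neq q) /= (eqP l) eqxx /=.
  by rewrite ?lo_mk ?bx_mk ?byy_mk /= ltn_add2l.
Qed.

Lemma treeB s : s != mk a true false ->
  [&& qadj s (pB s), lab' s (pB s) == Some tB & hB (pB s) < hB s].
Proof.
case: (mkP s) => u [x [y ->]]; rewrite /pB /hB; mkS.
case: x; case: y => /=.
-
  move=> _; case: (eqVneq u a) => [->|na]; mkS.
    rewrite qadj_copy (Hm ord0).1 lab'_mk /labm (adj_neq (Hm ord0).1) /= (Hm ord0).2 /=.
    rewrite ?eqxx ?pk_mb eq_sym (negbTE a_ne_b) /=.
    by mkS; apply: rk_lt => //; apply: hC.
  case E: (pk u) => [i|]; mkS.
    have [ni ui] := pk_some E; rewrite -ui qadj_copy (Hm i).1 lab'_mk /labm.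
    rewrite (adj_neq (Hm i).1) /= (Hm i).2 /= pk_mb (negbTE (mb_ne_a ni)) ui.
    by mkS; apply: rk_lt => //; apply: hC.
  rewrite (qadj_fy u true true) lab'_mk /labm eqxx /= !E /= (negbTE na) /=.
  by apply: rk_lt => //; apply: hC.
-
  rewrite mk_inj !eqxx !andbT => na.
  have /and3P [q l hh] := Ht na.
  rewrite qadj_copy q lab'_mk /labm (adj_neq q) /= (eqP l) eqxx /=.
  by rewrite ?lo_mk ?bx_mk ?byy_mk /= ltn_add2l.
-
  move=> _; case: (eqVneq u a) => [->|na]; mkS.
    rewrite (qadj_fx (ma ord0) false true) lab'_mk /labm eqxx /= !pk_a eqxx /=.
    by rewrite eqxx; apply: rk_lt => //; apply: hC.
  have /and3P [q l hh] := Ht na.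
  rewrite qadj_copy q lab'_mk /labm (adj_neq q) /= (eqP l) eqxx /=.
  by rewrite ?lo_mk ?bx_mk ?byy_mk /= ltn_add2l.
-
  move=> _; rewrite (qadj_fy u false false) lab'_mk /labm eqxx /=.
  by mkS; apply: rk_lt => //; apply: hC.
Qed.

Lemma treeT i s : i != ord0 -> s != mk (ma i) false false ->
  [&& qadj s (pT i s), lab' s (pT i s) == Some (tT i) & hT i (pT i s) < hT i s].
Proof.
move=> ni; case: (mkP s) => u [x [y ->]]; rewrite /pT /hT /pTm; mkS.
case: (eqVneq u (ma i)) => [->|na] /=.
  rewrite mk_inj eqxx /=; case: x; case: y => //= _; mkS.
  - rewrite (qadj_fy (ma i) true true) lab'_mk /labm eqxx /= pk_ma //=.
    by rewrite eqxx; apply: rk_lt => //; apply: hC.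
  - have /= -> := qadj_fx (ma i) true false.
    rewrite lab'_mk /labm eqxx /= pk_ma //= eqxx /=.
    by apply: rk_lt => //; apply: hC.
  - have /= -> := qadj_fx (ma i) false true.
    rewrite lab'_mk /labm eqxx /= pk_ma //= eqxx /=.
    by apply: rk_lt => //; apply: hC.
move=> _; have /and3P [q l hh] := Ht na.
rewrite qadj_copy q lab'_mk /labm (adj_neq q) !eqxx /= (eqP l) (negbTE ni).
by rewrite eqxx ?lo_mk ?bx_mk ?byy_mk /= ltn_add2l.
Qed.

Definition p' (j : 'I_k.+2) : qvert n.+2 -> qvert n.+2 :=
  if unlift ord0 j is Some i then (if i == ord0 then pA else pT i) else pB.
Definition h' (j : 'I_k.+2) : qvert n.+2 -> nat :=
  if unlift ord0 j is Some i then (if i == ord0 then hA else hT i) else hB.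
Definition ma' (j : 'I_k.+2) : qvert n.+2 :=
  if unlift ord0 j is Some i then mk (ma i) false false else mk a true false.
Definition mb' (j : 'I_k.+2) : qvert n.+2 :=
  if unlift ord0 j is Some i then mk (mb i) false false else mk b true false.

Lemma p'B : p' tB = pB. Proof. by rewrite /p' /tB unlift_none. Qed.
Lemma p'A : p' (tT ord0) = pA. Proof. by rewrite /p' /tT liftK eqxx. Qed.
Lemma p'T i : i != ord0 -> p' (tT i) = pT i.
Proof. by move=> ni; rewrite /p' /tT liftK (negbTE ni). Qed.
Lemma ma'B : ma' tB = mk a true false. Proof. by rewrite /ma' /tB unlift_none. Qed.
Lemma ma'T i : ma' (tT i) = mk (ma i) false false. Proof. by rewrite /ma' /tT liftK. Qed.

Ltac fin := rewrite ?mk_inj ?eqxx ?andbF ?andbT ?andFb //=.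

Lemma parent_all j s t : qadj s t -> lab' s t = Some j ->
  (s != ma' j /\ t = p' j s) \/ (t != ma' j /\ s = p' j t).
Proof.
case: (mkP s) => u [x [y ->]]; case: (mkP t) => v [x' [y' ->]].
rewrite lab'_mk => hq; move: (qadj_split hq) => /orP [/andP [/eqP <- hb]|/and3P [/eqP <- /eqP <- huv]].
- rewrite /labm eqxx.
  clear hq; case: x x' y y' hb => [] [] [] [] //= _.
  +
    case E: (pk u) => [i|].
      have [ni ui] := pk_some E; case=> <-; left.
      by rewrite ma'T p'T // /pT /pTm; mkS; rewrite ui eqxx; fin.
    case: (eqVneq u a) => [->|na]; case=> <-; left.
      by rewrite ma'T p'A /pA /pAm; mkS; rewrite eqxx; fin.
    by rewrite ma'B p'B /pB /pBm; mkS; rewrite (negbTE na) E; fin.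
  +
    case E: (pk u) => [i|].
      have [ni ui] := pk_some E; case=> <-; right.
      by rewrite ma'T p'T // /pT /pTm; mkS; rewrite ui eqxx; fin.
    case: (eqVneq u a) => [->|na]; case=> <-; right.
      by rewrite ma'T p'A /pA /pAm; mkS; rewrite eqxx; fin.
    by rewrite ma'B p'B /pB /pBm; mkS; rewrite (negbTE na) E; fin.
  +
    case E: (pk u) => [i|].
      have [ni ui] := pk_some E; case=> <-; right.
      by rewrite ma'T p'T // /pT /pTm; mkS; rewrite ui eqxx; fin.
    case: (eqVneq u a) => [->|na]; case=> <-; right.
      by rewrite ma'B p'B /pB /pBm; mkS; rewrite eqxx; fin.
    by rewrite ma'T p'A /pA /pAm; mkS; rewrite E (negbTE na); fin.
  +
    case E: (pk u) => [i|].
      have [ni ui] := pk_some E; case=> <-; left.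
      by rewrite ma'T p'T // /pT /pTm; mkS; rewrite ui eqxx; fin.
    case=> <-; left.
    by rewrite ma'T p'A /pA /pAm; mkS; rewrite E; fin.
  +
    case E: (pk u) => [i|].
      have [ni ui] := pk_some E; case=> <-; left.
      by rewrite ma'T p'T // /pT /pTm; mkS; rewrite ui eqxx; fin.
    case: (eqVneq u a) => [->|na]; case=> <-; left.
      by rewrite ma'B p'B /pB /pBm; mkS; rewrite eqxx; fin.
    by rewrite ma'T p'A /pA /pAm; mkS; rewrite E (negbTE na); fin.
  +
    case E: (pk u) => [i|].
      have [ni ui] := pk_some E; case=> <-; right.
      by rewrite ma'T p'T // /pT /pTm; mkS; rewrite ui eqxx; fin.
    case=> <-; right.
    by rewrite ma'T p'A /pA /pAm; mkS; rewrite E; fin.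
  +
    case=> <-; right.
    by rewrite ma'B p'B /pB /pBm; mkS; fin.
  +
    case=> <-; left.
    by rewrite ma'B p'B /pB /pBm; mkS; fin.
- clear hq; rewrite /labm (adj_neq huv) !eqxx /=.
  case E: (lab u v) => [i|].
    case: (eqVneq i ord0) => [Ei|ni].
      move: E; rewrite Ei => E.
      case: (Hr huv E) => [[nu ->]|[nv ->]].
      + case: x; case: y => /=; case=> <-; left.
        * by rewrite ma'T p'A /pA /pAm; mkS; rewrite (negbTE nu); fin.
        * by rewrite ma'B p'B /pB /pBm; mkS; fin.
        * by rewrite ma'B p'B /pB /pBm; mkS; rewrite (negbTE nu); fin.
        * by rewrite ma'T p'A /pA /pAm; mkS; fin; rewrite ?nu ?(negbTE nu).
      + case: x; case: y => /=; case=> <-; right.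
        * by rewrite ma'T p'A /pA /pAm; mkS; rewrite (negbTE nv); fin.
        * by rewrite ma'B p'B /pB /pBm; mkS; fin.
        * by rewrite ma'B p'B /pB /pBm; mkS; rewrite (negbTE nv); fin.
        * by rewrite ma'T p'A /pA /pAm; mkS; fin; rewrite ?nv ?(negbTE nv).
    rewrite ?(negbTE ni); case=> <-.
    case: (Hr huv E) => [[nu ->]|[nv ->]]; [left|right];
      rewrite ma'T p'T // /pT /pTm; mkS.
      by rewrite (negbTE nu); fin; rewrite ?nu ?(negbTE nu).
    by rewrite (negbTE nv); fin; rewrite ?nv ?(negbTE nv).
  have [l Hl] := Hn huv E.
  have key : forall w w', (w = ma l /\ w' = mb l) ->
     (if x then if y then Some tB else if [set w; w'] == [set a; b] then None else Some (tT ord0)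
      else if y then Some (tT ord0) else None) = Some j ->
     (mk w x y != ma' j /\ mk w' x y = p' j (mk w x y)).
    move=> w w' [-> ->].
    case: (eqVneq l ord0) => [El|nl].
      rewrite El; case: x; case: y => //=; rewrite ?eqxx //; case=> <-.
      * by rewrite ma'B p'B /pB /pBm; mkS; rewrite eqxx; fin.
      * by rewrite ma'T p'A /pA /pAm; mkS; rewrite pk_a eqxx; fin.
    case: x; case: y => //=; rewrite ?set_ab //; case=> <-.
    * have [d1 _ _ _] := dd nl.
      by rewrite ma'B p'B /pB /pBm; mkS; rewrite pk_ma // (negbTE d1); fin.
    * by rewrite ma'T p'A /pA /pAm; mkS; rewrite pk_ma //; fin.
    * by rewrite ma'T p'A /pA /pAm; mkS; rewrite pk_ma //; fin.
  case: Hl => [[eu ev]|[eu ev]].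
    by move=> H; left; apply: key.
  by move=> H; right; apply: key => //; move: H; rewrite setUC.
Qed.

Lemma step_dec : Dec n.+2 k.+2.
Proof.
exists lab', p', h', ma', mb'; split.
- exact: lab'_sym.
- move=> j v; case: (unliftP ord0 j) => [i ->|->].
    case: (eqVneq i ord0) => [->|ni].
      by rewrite -/(tT ord0) ma'T p'A /h' /tT liftK eqxx => /treeA.
    by rewrite -/(tT i) ma'T p'T // /h' /tT liftK (negbTE ni) => /(treeT ni).
  by rewrite -/tB ma'B p'B /h' /tB unlift_none => /treeB.
- exact: parent_all.
- move=> j; case: (unliftP ord0 j) => [i ->|->].
    rewrite /ma' /mb' liftK qadj_copy (Hm i).1 lab'_mk /labm (adj_neq (Hm i).1) /=.
    by rewrite (Hm i).2.
  rewrite /ma' /mb' unlift_none qadj_copy (Hm ord0).1 lab'_mk /labm (adj_neq (Hm ord0).1) /=.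
  by rewrite (Hm ord0).2 eqxx.
split.
- move=> s t; case: (mkP s) => u [x [y ->]]; case: (mkP t) => v [x' [y' ->]].
  rewrite lab'_mk => hq; move: (qadj_split hq) => /orP [/andP [/eqP <- hb]|/and3P [/eqP <- /eqP <- huv]].
    rewrite /labm eqxx; clear hq; case: x x' y y' hb => [] [] [] [] //= _;
      by case: (pk u) => [?|]; case: (u == a).
  clear hq; rewrite /labm (adj_neq huv) !eqxx /=.
  case E: (lab u v) => [i|]; first by case: (i == ord0); case: x; case: y.
  have [l Hl] := Hn huv E.
  case: x; case: y => //=.
    case: ifP => // /eqP /set2_eq Hab _; exists tB; rewrite /ma' /mb' /tB unlift_none.
    by case: Hab => [[-> ->]|[-> ->]]; [left|right].
  move=> _; exists (tT l); rewrite /ma' /mb' /tT liftK.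
  by case: Hl => [[-> ->]|[-> ->]]; [left|right].
- move=> j1 j2; case: (unliftP ord0 j1) => [i1 ->|->]; case: (unliftP ord0 j2) => [i2 ->|->];
    rewrite /ma' /mb' ?liftK ?unlift_none disj2 ?mk_inj ?andbF ?andbT //=.
  + rewrite (inj_eq lift_inj) => /dd [d1 d2 d3 d4].
    by rewrite d1 d2 d3 d4.
Qed.

End Step.

Lemma dec_step n k : Dec n k.+1 -> Dec n.+2 k.+2.
Proof.
move=> [lab [p [h [ma [mb [Hs Ht Hr Hm [Hn Hd]]]]]]].
exact: (step_dec Hs Ht Hr Hm Hn Hd).
Qed.

Lemma q0 (u v : qvert 0) : u = v.
Proof. by apply/ffunP => -[]. Qed.

Definition u0 : qvert 0 := [ffun i => false].

Definition lab0 (s t : qvert 2) : option 'I_1 :=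
  if qadj s t then (if ~~ bx s && ~~ bx t then None else Some ord0) else None.
Definition p0 (i : 'I_1) (s : qvert 2) : qvert 2 :=
  match bx s, byy s with
  | true, false => mk u0 false false
  | true, true => mk u0 true false
  | false, true => mk u0 true true
  | false, false => mk u0 false false
  end.
Definition h0 (i : 'I_1) (s : qvert 2) : nat := levT (bx s) (byy s).

Lemma qadj_sym n (s t : qvert n) : qadj s t = qadj t s.
Proof.
rewrite /qadj (_ : [set i | s i != t i] = [set i | t i != s i]) //.
by apply/setP=> i; rewrite !inE eq_sym.
Qed.

Ltac mkS := rewrite ?lo_mk ?bx_mk ?byy_mk.

Lemma dec_base : Dec 2 1.
Proof.
exists lab0, p0, h0, (fun _ => mk u0 false false), (fun _ => mk u0 false true); split.
- by move=> s t; rewrite /lab0 qadj_sym andbC.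
- move=> i s; rewrite (ord1 i); case: (mkP s) => u [x [y ->]]; rewrite (q0 u u0) /p0 /h0 /lab0; mkS.
  case: x; case: y => //=; rewrite ?mk_inj ?eqxx //= => _; mkS.
  + by have /= -> := qadj_fy u0 true true.
  + by have /= -> := qadj_fx u0 true false.
  + by have /= -> := qadj_fx u0 false true.
- move=> i s t; case: (mkP s) => u [x [y ->]]; case: (mkP t) => v [x' [y' ->]].
  rewrite (q0 u u0) (q0 v u0) /lab0 => hq; rewrite hq; mkS.
  move: (qadj_split hq) => /orP [/andP [_ hb]|/and3P [_ _ huv]]; last first.
    by move: huv; rewrite (negbTE (qadj_irr _)).
  rewrite /p0 (ord1 i); clear hq.
  case: x x' y y' hb => [] [] [] [] //= _ _; mkS;
    rewrite ?mk_inj ?eqxx /=; by [left | right].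
- move=> i; split; first exact: (qadj_fy u0 false false).
  by rewrite /lab0 (qadj_fy u0 false false) !bx_mk.
- split=> [s t|i j]; last by rewrite (ord1 i) (ord1 j) eqxx.
  case: (mkP s) => u [x [y ->]]; case: (mkP t) => v [x' [y' ->]].
  rewrite (q0 u u0) (q0 v u0) /lab0 => hq; rewrite hq; mkS.
  move: (qadj_split hq) => /orP [/andP [_ hb]|/and3P [_ _ huv]]; last first.
    by move: huv; rewrite (negbTE (qadj_irr _)).
  clear hq.
  by case: x x' y y' hb => [] [] [] [] //= _ _; exists ord0; [right | left]; split.
Qed.

Lemma dec_all k : Dec (2 * k.+1) k.+1.
Proof.
elim: k => [|k IH]; first exact: dec_base.
have -> : 2 * k.+2 = (2 * k.+1).+2 by rewrite mulnS add2n.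
exact: dec_step.
Qed.

Definition Tset n K (lab : qvert n -> qvert n -> option 'I_K) (i : 'I_K) : {set {set qvert n}} :=
  [set e in qedges n | [exists s, exists t, (e == [set s; t]) && qadj s t && (lab s t == Some i)]].

Lemma TsetP n K (lab : qvert n -> qvert n -> option 'I_K) i e :
  e \in Tset lab i -> exists s t, [/\ e = [set s; t], qadj s t & lab s t = Some i].
Proof.
rewrite inE => /andP [_ /existsP [s /existsP [t /andP [/andP [/eqP -> q] /eqP l]]]].
by exists s, t.
Qed.

Lemma qedges_in n (s t : qvert n) : qadj s t -> [set s; t] \in qedges n.
Proof. by move=> q; rewrite inE; apply/existsP; exists s; apply/existsP; exists t; rewrite q eqxx. Qed.

Lemma qedgesP n e : e \in qedges n -> exists s t, e = [set s; t] /\ qadj s t.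
Proof.
by rewrite inE => /existsP [s /existsP [t /andP [q /eqP ->]]]; exists s, t.
Qed.

Lemma Tset_in n K (lab : qvert n -> qvert n -> option 'I_K) i s t :
  qadj s t -> lab s t = Some i -> [set s; t] \in Tset lab i.
Proof.
move=> q l; rewrite inE qedges_in //=; apply/existsP; exists s; apply/existsP; exists t.
by rewrite q eqxx l eqxx.
Qed.

Lemma lab_set n K (lab : qvert n -> qvert n -> option K) s t s' t' :
  (forall s t, lab s t = lab t s) -> [set s; t] = [set s'; t'] -> lab s t = lab s' t'.
Proof. by move=> Hs /set2_eq [[-> ->]|[-> ->]]. Qed.

Theorem mainTheorem3 (k : nat) (hk : 1 <= k) :
  exists (T : 'I_k -> {set {set qvert (2 * k)}}) (M : {set {set qvert (2 * k)}}),
    [/\ forall i, spanning_tree (T i),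
        forall i j, i != j -> [disjoint T i & T j],
        matching M /\ #|M| = k,
        forall i, [disjoint T i & M]
      & qedges (2 * k) = (\bigcup_(i < k) T i) :|: M].
Proof.
case: k hk => [//|k] _.
have [lab [p [h [ma [mb [Hs Ht Hr Hm [Hn Hd]]]]]]] := dec_all k.
have Minj : injective (fun i => [set ma i; mb i]).
  move=> i j /= E; apply/eqP; apply/negP=> /negP /Hd D.
  have := disjointFr D (set21 (ma i) (mb i)); by rewrite -E set21.
exists (Tset lab), [set [set ma i; mb i] | i in [set: 'I_k.+1]]; split.
- move=> i; apply: (@ptree_spanning _ _ (ma i) (p i) (h i)).
  + by apply/subsetP=> e; rewrite inE => /andP [].
  + by move=> v /(Ht i) /and3P [].
  + by move=> v /(Ht i) /and3P [q /eqP l _]; apply: Tset_in.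
  + move=> e /TsetP [s [t [-> q l]]].
    case: (Hr _ _ _ q l) => [[ns ->]|[nt ->]]; first by exists s.
    by exists t => //; rewrite setUC.
- move=> i j nij; rewrite -setI_eq0; apply/eqP/setP=> e; rewrite inE [e \in set0]inE.
  apply/negbTE/negP=> /andP [/TsetP [s [t [-> q l]]] /TsetP [s' [t' [E q' l']]]].
  move: nij; rewrite -(inj_eq (@Some_inj _)) -l -l' (lab_set Hs E) eqxx //.
- split; last by rewrite card_imset // cardsT card_ord.
  split.
    apply/subsetP=> e /imsetP [i _ ->]; exact: qedges_in (Hm i).1.
  move=> e f /imsetP [i _ ->] /imsetP [j _ ->] nij.
  apply: Hd; apply: contraNneq nij => ->; exact: eqxx.
- move=> i; rewrite -setI_eq0; apply/eqP/setP=> e; rewrite inE [e \in set0]inE.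
  apply/negbTE/negP=> /andP [/TsetP [s [t [-> q l]]] /imsetP [j _ E]].
  by move: (Hm j).2; rewrite -(lab_set Hs E) l.
- apply/setP=> e; apply/idP/idP.
    move=> /qedgesP [s [t [-> q]]]; rewrite inE; case E: (lab s t) => [i|].
      by apply/orP; left; apply/bigcupP; exists i => //; apply: Tset_in.
    apply/orP; right; apply/imsetP; have [i [[-> ->]|[-> ->]]] := Hn _ _ q E; exists i => //.
    by rewrite setUC.
  rewrite inE => /orP [/bigcupP [i _ /TsetP [s [t [-> q _]]]]|/imsetP [i _ ->]];
    [exact: qedges_in | exact: qedges_in (Hm i).1].
Qed.
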